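(* Let $G=(V,E)$ be a finite connected block graph with at least two vertices that has no false twins (no pair of distinct vertices $u,v$ with $N(u)=N(v)$), and suppose $G$ is isomorphic neither to the path $P_2$ on two vertices nor to the path $P_4$ on four vertices. Then $\gamma^{OLD}(G)\leq |V(G)|-1$.
   Context: A block graph is a graph in which every maximal 2-connected subgraph (block) is a clique. For a vertex $u$, $N(u)$ denotes its open neighborhood. A set $C\subseteq V(G)$ is an open locating-dominating code (OLD-code) if $N(u)\cap C\neq\emptyset$ for every vertex $u$ and $N(u)\cap C\neq N(v)\cap C$ for all distinct vertices $u,v$. A graph admits an OLD-code iff it has no isolated vertices and no false twins. $\gamma^{OLD}(G)$ is the minimum cardinality of an OLD-code of $G$. *)

(* Defs.v *)
From mathcomp Require Import all_boot.
Set Implicit Arguments. Unset Strict Implicit. Unset Printing Implicit Defensive.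

Section Graphs.
Variable T : finType.
Variable e : rel T.

Definition simple_graph := symmetric e /\ irreflexive e.

Definition nbhd (u : T) : {set T} := [set v | e u v].

Definition induced_rel (B : {set T}) : rel T :=
  [rel x y | [&& e x y, x \in B & y \in B]].
Definition induced_connected (B : {set T}) : Prop :=
  forall x y, x \in B -> y \in B -> connect (induced_rel B) x y.

Definition connected_graph : Prop := induced_connected setT.

(* 2-connected vertex set: at least two vertices, induces a connected
   subgraph, and stays connected after deleting any single vertex
   (so K2 is 2-connected, as in the usual notion of blocks). *)
Definition biconnected (B : {set T}) : Prop :=
  1 < #|B| /\ induced_connected B /\
  forall v, v \in B -> induced_connected (B :\ v).

Definition is_block (B : {set T}) : Prop :=
  biconnected B /\ forall B' : {set T}, B \subset B' -> biconnected B' -> B' = B.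

Definition is_clique (B : {set T}) : Prop :=
  forall x y, x \in B -> y \in B -> x != y -> e x y.

Definition block_graph : Prop := forall B, is_block B -> is_clique B.

Definition no_false_twins : Prop :=
  forall u v, u != v -> nbhd u != nbhd v.

Definition iso_path (n : nat) : Prop :=
  exists f : T -> 'I_n, bijective f /\
    forall x y, e x y = ((f x).+1 == f y) || ((f y).+1 == f x).

Definition is_OLD (C : {set T}) : bool :=
  [forall u, nbhd u :&: C != set0] &&
  [forall u, forall v, (u != v) ==> (nbhd u :&: C != nbhd v :&: C)].

(* minimum cardinality of an OLD-code (default #|T| if none exists,
   which never happens for graphs admitting an OLD-code) *)
Definition gamma_OLD : nat := \big[minn/#|T|]_(C : {set T} | is_OLD C) #|C|.

End Graphs.

(* Main.v *)
Require Import Defs.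
From mathcomp Require Import all_boot.
From Stdlib Require Import Classical.
From mathcomp Require Import zify.
Set Implicit Arguments. Unset Strict Implicit.

Lemma ind_sym (T : finType) (e : rel T) (B : {set T}) :
  symmetric e -> symmetric (induced_rel e B).
Proof. by move=> se x y; rewrite /induced_rel /= se; case: (e y x); case: (x \in B); case: (y \in B). Qed.

Lemma hub_conn (T : finType) (e : rel T) (B : {set T}) z :
  symmetric e -> z \in B ->
  (forall p, p \in B -> p = z \/ e p z \/ exists2 r, r \in B & e p r && e r z) ->
  induced_connected e B.
Proof.
move=> se zB H.
have Hc : forall p, p \in B -> connect (induced_rel e B) p z.
  move=> p pB; case: (H p pB) => [->|[epz|[r rB /andP[epr erz]]]].
  - exact: connect0.
  - by apply: connect1; rewrite /induced_rel /= epz pB zB.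
  - apply: (connect_trans (y:=r)); apply: connect1; by rewrite /induced_rel /=; apply/and3P.
move=> x y xB yB; apply: (connect_trans (Hc x xB)).
by rewrite (sym_connect_sym (ind_sym B se)); apply: Hc.
Qed.

Lemma exists_block (T : finType) (e : rel T) (S : {set T}) :
  biconnected e S -> exists B : {set T}, S \subset B /\ is_block e B.
Proof.
move=> bS.
suff H : forall k (B : {set T}), biconnected e B -> S \subset B -> #|T| - #|B| <= k ->
  exists B' : {set T}, S \subset B' /\ is_block e B'.
  by apply: (H #|T| S bS (subxx _)); rewrite leq_subr.
elim=> [|k IH] B bB SB hk.
- exists B; split => //; split => // B' BB' _.
  apply/esym/eqP; rewrite eqEcard BB' /=.
  have := max_card B'; move: hk. lia.
- case: (classic (is_block e B)) => [bl|nbl]; first by exists B.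
  have [B' [BB' bB' neq]] : exists B' : {set T}, [/\ B \subset B', biconnected e B' & B' <> B].
    apply: NNPP => hn; apply: nbl; split => // B' h1 h2.
    apply: NNPP => h3; apply: hn; by exists B'.
  apply: (IH B' bB' (subset_trans SB BB')).
  have pr : B \proper B' by rewrite properEneq BB' andbT eq_sym; apply/eqP.
  have := proper_card pr => lt.
  have := max_card (mem B'). move: hk lt. lia.
Qed.

Lemma mem4 (T : finType) (p x a y b : T) : p \in [set x; a; y; b] -> [\/ p = x, p = a, p = y | p = b].
Proof. rewrite !inE. move=> /orP[/orP[/orP[]|]|]/eqP; by constructor. Qed.

Lemma c4 (T : finType) (e : rel T) : simple_graph e -> block_graph e ->
  forall x a y b, x != y -> a != b -> e x a -> e a y -> e y b -> e b x -> e x y.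
Proof.
move=> [se ir] bg x a y b xy ab exa eay eyb ebx.
have eax : e a x by rewrite se.
have eya : e y a by rewrite se.
have eby : e b y by rewrite se.
have exb : e x b by rewrite se.
have ne : forall u v, e u v -> (u == v) = false.
  by move=> u v euv; apply/eqP => E; move: euv; rewrite E ir.
have nE := (ne _ _ exa, ne _ _ eax, ne _ _ eay, ne _ _ eya, ne _ _ eyb, ne _ _ eby,
            ne _ _ ebx, ne _ _ exb, negbTE xy, negbTE ab).
have yx : (y == x) = false by rewrite eq_sym (negbTE xy).
have ba : (b == a) = false by rewrite eq_sym (negbTE ab).
have Es := (exa, eax, eay, eya, eyb, eby, ebx, exb).

Ltac hubt x a y b nE yx ba Es :=
  first [ by left
        | by right; left; rewrite ?Es
        | by right; right; exists x; rewrite ?inE ?eqxx ?nE ?yx ?ba ?orbT ?Es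
        | by right; right; exists a; rewrite ?inE ?eqxx ?nE ?yx ?ba ?orbT ?Es
        | by right; right; exists y; rewrite ?inE ?eqxx ?nE ?yx ?ba ?orbT ?Es
        | by right; right; exists b; rewrite ?inE ?eqxx ?nE ?yx ?ba ?orbT ?Es ].
have bS : biconnected e [set x; a; y; b].
  split; [|split].
  - apply/card_gt1P; exists x, y; by rewrite !inE ?eqxx ?orbT ?xy.
  - apply: (hub_conn (z:=y)) => //; first by rewrite !inE eqxx ?orbT.
    move=> p /mem4 [] ->; hubt x a y b nE yx ba Es.
  - move=> v /mem4 [] ->.
    + apply: (hub_conn (z:=y)) => //; first by rewrite !inE ?eqxx ?nE ?yx ?ba ?orbT.
      move=> p; rewrite in_setD1 => /andP[pv /mem4 [] Ep]; rewrite Ep in pv *;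
        (try by rewrite eqxx in pv); hubt x a y b nE yx ba Es.
    + apply: (hub_conn (z:=b)) => //; first by rewrite !inE ?eqxx ?nE ?yx ?ba ?orbT.
      move=> p; rewrite in_setD1 => /andP[pv /mem4 [] Ep]; rewrite Ep in pv *;
        (try by rewrite eqxx in pv); hubt x a y b nE yx ba Es.
    + apply: (hub_conn (z:=x)) => //; first by rewrite !inE ?eqxx ?nE ?yx ?ba ?orbT.
      move=> p; rewrite in_setD1 => /andP[pv /mem4 [] Ep]; rewrite Ep in pv *;
        (try by rewrite eqxx in pv); hubt x a y b nE yx ba Es.
    + apply: (hub_conn (z:=a)) => //; first by rewrite !inE ?eqxx ?nE ?yx ?ba ?orbT.
      move=> p; rewrite in_setD1 => /andP[pv /mem4 [] Ep]; rewrite Ep in pv *;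
        (try by rewrite eqxx in pv); hubt x a y b nE yx ba Es.
have [B [SB bB]] := exists_block bS.
apply: (bg B bB) => //; apply: (subsetP SB); by rewrite !inE eqxx ?orbT.
Qed.

Lemma closed_all (T : finType) (e : rel T) (S : {set T}) s0 :
  simple_graph e -> connected_graph e ->
  (forall s y, s \in S -> e s y -> y \in S) -> s0 \in S -> forall y, y \in S.
Proof.
move=> [se ir] conn H s0S y.
have cl : closed (induced_rel e [set: T]) (mem S).
  move=> p q; rewrite /induced_rel /= => /andP[epq _].
  apply/idP/idP => [pS|qS]; first exact: H epq.
  by apply: (H q p) => //; rewrite se.
by rewrite -(closed_connect cl (conn s0 y (in_setT _) (in_setT _))).
Qed.

Lemma has_nbr (T : finType) (e : rel T) : simple_graph e -> connected_graph e ->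
  1 < #|T| -> forall u, exists z, e u z.
Proof.
move=> sg conn n2 u; apply: NNPP => hn.
have all1 := closed_all (S := [set u]) sg conn.
have H : forall y, y \in [set u].
  apply: (all1 u) => [s y|]; last by rewrite inE.
  rewrite inE => /eqP -> euy; exfalso; apply: hn; by exists y.
move/card_gt1P: n2 => [p [q [_ _ pq]]].
have Hp := H p; have Hq := H q; rewrite !inE in Hp Hq; by rewrite (eqP Hp) (eqP Hq) eqxx in pq.
Qed.

Lemma leafE (T : finType) (e : rel T) x a : nbhd e x = [set a] -> forall z, e x z = (z == a).
Proof. move=> H z; have := congr1 (fun S : {set T} => z \in S) H; by rewrite /= !inE. Qed.

Lemma pairE (T : finType) (e : rel T) x a b : nbhd e x = [set a; b] ->
  forall z, e x z = (z == a) || (z == b).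
Proof. move=> H z; have := congr1 (fun S : {set T} => z \in S) H; by rewrite /= !inE. Qed.

Lemma one_side (T : finType) (e : rel T) : simple_graph e -> block_graph e ->
  (forall u, exists z, e u z) -> forall v u w, u != w -> e u v -> ~~ e w v ->
  (forall z, z != v -> e u z = e w z) ->
  exists a, [/\ a != v, nbhd e w = [set a] & nbhd e u = [set a; v]].
Proof.
move=> sg bg hn v u w uw euv nwv H.
have [se ir] := sg.
have [a ewa] := hn w.
have av : a != v by apply/eqP => E; move: nwv; rewrite -E ewa.
have uv : u != v by apply/eqP => E; move: euv; rewrite E ir.
have nwu : ~~ e w u by apply/negP => ewu; move: (H u uv); rewrite ewu ir.
have eua : e u a by rewrite H.
have cl : forall z, e w z = (z == a).
  move=> z; apply/idP/eqP => [ewz|->//].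
  apply/eqP; apply: contraNT nwu => za.
  have zv : z != v by apply/eqP => E; move: nwv; rewrite -E ewz.
  apply: (c4 sg bg (a:=a) (b:=z)) => //.
  - by rewrite eq_sym.
  - by rewrite eq_sym.
  - by rewrite se.
  - by rewrite H.
  - by rewrite se.
exists a; split => //; apply/setP => z; rewrite !inE.
- exact: cl.
- case: (z =P v) => [->|/eqP zv]; first by rewrite euv orbT.
  by rewrite orbF H // cl.
Qed.

Lemma bad_pair (T : finType) (e : rel T) : simple_graph e -> block_graph e ->
  (forall u, exists z, e u z) -> forall v u w, u != w -> nbhd e u != nbhd e w ->
  nbhd e u :&: ([set: T] :\ v) = nbhd e w :&: ([set: T] :\ v) ->
  exists u' w' a, [/\ u' != w', a != v, nbhd e w' = [set a] & nbhd e u' = [set a; v]].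
Proof.
move=> sg bg hn v u w uw neq Heq.
have eqo : forall z, z != v -> e u z = e w z.
  move=> z zv; have := congr1 (fun S : {set T} => z \in S) Heq; by rewrite /= !inE zv /= !andbT.
have [z hz] : exists z, e u z != e w z.
  case: (boolP [exists z, e u z != e w z]) => [/existsP[z hz]|/existsPn hn']; first by exists z.
  exfalso; apply: (negP neq); apply/eqP/setP => z; rewrite !inE.
  by move: (hn' z); rewrite negbK => /eqP.
have zv : z = v by apply/eqP; apply: contraNT hz => zv; rewrite eqo.
subst z.
case euv : (e u v) hz => /= hz.
- have [a [h1 h2 h3]] := one_side sg bg hn uw euv hz eqo.
  by exists u, w, a.
- have ewv : e w v by move: hz; case: (e w v).
  have uw' : w != u by rewrite eq_sym.
  have nuv : ~~ e u v by rewrite euv.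
  have eqo' : forall z, z != v -> e w z = e u z by move=> z' zv; rewrite eqo.
  have [a [h1 h2 h3]] := one_side sg bg hn uw' ewv nuv eqo'.
  by exists w, u, a; rewrite eq_sym.
Qed.

Lemma iso_seq (T : finType) (e : rel T) n (s : seq T) x0 :
  size s = n.+1 -> uniq s -> (forall z, z \in s) ->
  (forall i j, i < n.+1 -> j < n.+1 ->
     e (nth x0 s i) (nth x0 s j) = (i.+1 == j) || (j.+1 == i)) ->
  iso_path e n.+1.
Proof.
move=> sz us alls H.
have im : forall z, index z s < n.+1 by move=> z; rewrite -sz index_mem.
exists (fun z => inord (index z s)); split.
  exists (fun i : 'I_n.+1 => nth x0 s i).
  - by move=> z /=; rewrite inordK // nth_index.
  - move=> i /=; apply: val_inj => /=; rewrite index_uniq ?inordK ?sz //.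
move=> y z; rewrite !inordK // -H // !nth_index //.
Qed.

Lemma p4_iso (T : finType) (e : rel T) x a b w :
  simple_graph e -> connected_graph e ->
  (forall z, e x z = (z == a)) -> (forall z, e a z = (z == b) || (z == x)) ->
  (forall z, e b z = (z == a) || (z == w)) -> (forall z, e w z = (z == b)) ->
  b != x -> w != a -> iso_path e 4.
Proof.
move=> sg conn hx ha hb hw bx wa.
have [se ir] := sg.
have ne : forall u v, e u v -> ((u == v) = false) * ((v == u) = false).
  by move=> u v euv; split; apply/eqP => E; move: euv; rewrite E ?ir // se ir.
have exa : e x a by rewrite hx.
have eab : e a b by rewrite ha eqxx.
have ebw : e b w by rewrite hb eqxx orbT.
have bx' : (b == x) = false by apply/negbTE.
have xb' : (x == b) = false by rewrite eq_sym bx'.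
have wa' : (w == a) = false by apply/negbTE.
have aw' : (a == w) = false by rewrite eq_sym wa'.
have xw' : (x == w) = false.
  apply/eqP => E; move: (hx b); rewrite E hw eqxx => /esym/eqP E2.
  by move: eab; rewrite E2 ir.
have wx' : (w == x) = false by rewrite eq_sym xw'.
have D := (ne _ _ exa, ne _ _ eab, ne _ _ ebw, bx', xb', wa', aw', xw', wx').
apply: (@iso_seq T e 3 [:: x; a; b; w] x) => //.
- by rewrite /= !inE ?D.
- move=> z.
  have Hz : z \in [set x; a; b; w].
    apply: (closed_all (s0:=x)) sg conn _ _ z; last by rewrite !inE eqxx.
    move=> s y /mem4 [] -> ; rewrite ?hx ?ha ?hb ?hw.
    + by move/eqP->; rewrite !inE eqxx ?orbT.
    + by case/orP=> /eqP->; rewrite !inE eqxx ?orbT.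
    + by case/orP=> /eqP->; rewrite !inE eqxx ?orbT.
    + by move/eqP->; rewrite !inE eqxx ?orbT.
  by case/mem4: Hz => ->; rewrite !inE eqxx ?orbT.
- move=> [|[|[|[|i]]]] [|[|[|[|j]]]] //= _ _; by rewrite ?hx ?ha ?hb ?hw ?eqxx ?D.
Qed.

Lemma p2_iso (T : finType) (e : rel T) x a :
  simple_graph e -> connected_graph e ->
  (forall z, e x z = (z == a)) -> (forall z, e a z = (z == x)) -> iso_path e 2.
Proof.
move=> sg conn hx ha.
have [se ir] := sg.
have exa : e x a by rewrite hx.
have xa : (x == a) = false by apply/eqP => E; move: exa; rewrite E ir.
have ax : (a == x) = false by rewrite eq_sym xa.
apply: (@iso_seq T e 1 [:: x; a] x) => //.
- by rewrite /= !inE xa.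
- move=> z.
  have Hz : z \in [set x; a].
    apply: (closed_all (s0:=x)) sg conn _ _ z; last by rewrite !inE eqxx.
    move=> s y; rewrite !inE => /orP[]/eqP-> ; rewrite ?hx ?ha => /eqP->;
      by rewrite eqxx ?orbT.
  by move: Hz; rewrite !inE => /orP[]/eqP->; rewrite eqxx ?orbT.
- move=> [|[|i]] [|[|j]] //= _ _; by rewrite ?hx ?ha ?eqxx ?xa ?ax.
Qed.

Lemma bigmin_le (I : eqType) (r : seq I) (P : pred I) (F : I -> nat) x0 j :
  j \in r -> P j -> \big[minn/x0]_(i <- r | P i) F i <= F j.
Proof.
elim: r => // h r IH; rewrite inE big_cons => /orP[/eqP<-|jr] Pj.
  by rewrite Pj geq_minl.
case: (P h); last exact: IH.
by rewrite geq_min IH // orbT.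
Qed.

Theorem theorem2p2 (T : finType) (e : rel T) :
  simple_graph e ->
  connected_graph e ->
  block_graph e ->
  1 < #|T| ->
  no_false_twins e ->
  ~ iso_path e 2 ->
  ~ iso_path e 4 ->
  gamma_OLD e <= #|T| - 1.
Proof.
move=> sg conn bg n2 nft np2 np4.
have [se ir] := sg.
have hn := has_nbr sg conn n2.
pose badp v := exists u w a, [/\ u != w, a != v, nbhd e w = [set a] & nbhd e u = [set a; v]].
suff [v [H1 H2]] : exists v, (forall u, exists2 z, e u z & z != v) /\ ~ badp v.
  have old : is_OLD e ([set: T] :\ v).
    apply/andP; split.
    - apply/forallP => u; have [z ez zv] := H1 u; apply/set0Pn; exists z.
      by rewrite !inE ez zv.
    - apply/forallP => u; apply/forallP => w; apply/implyP => uw.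
      apply/negP => /eqP Heq; apply: H2.
      exact: (bad_pair sg bg hn uw (nft _ _ uw) Heq).
  rewrite /gamma_OLD.
  apply: leq_trans (bigmin_le _ _ (j := [set: T] :\ v) (mem_index_enum _) old) _.
  have := cardsD1 v [set: T]; rewrite in_setT cardsT /=; lia.
case: (classic (exists x a, nbhd e x = [set a])) => [[x [a lx]]|nl]; last first.
  move/card_gt1P: n2 => [v [_ [_ _ _]]].
  exists v; split.
  - move=> u; case: (boolP [exists z, e u z && (z != v)]) => [/existsP[z /andP[ez zv]]|/existsPn hnz].
      by exists z.
    exfalso; apply: nl; exists u, v; apply/setP => z; rewrite !inE.
    have [z0 ez0] := hn u.
    have z0v : z0 = v by move: (hnz z0); rewrite ez0 /= negbK => /eqP.
    case: (z =P v) => [->|/eqP zv]; first by rewrite -z0v ez0.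
    by move: (hnz z); rewrite zv andbT => /negbTE.
  - move=> [u [w [a [_ _ lw _]]]]; apply: nl; by exists w, a.
have hx := leafE lx.
case: (classic (forall u, exists2 z, e u z & z != x)) => [H1|H1]; last first.
  exfalso; apply: H1 => u.
  case: (boolP [exists z, e u z && (z != x)]) => [/existsP[z /andP[ez zv]]|/existsPn hnz].
    by exists z.
  exfalso; apply: np2.
  have hu : forall z, e u z = (z == x).
    have [z0 ez0] := hn u.
    have z0v : z0 = x by move: (hnz z0); rewrite ez0 /= negbK => /eqP.
    move=> z; case: (z =P x) => [->|/eqP zv]; first by rewrite -z0v ez0.
    by move: (hnz z); rewrite zv andbT => /negbTE.
  have ua : u = a by apply/eqP; rewrite -hx se hu.
  subst u; exact: (p2_iso sg conn hx hu).
case: (classic (badp x)) => [[u [w [b [uw bx lw lu]]]]|nb]; last by exists x.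
have hw := leafE lw.
have hu := pairE lu.
have ua : u = a by apply/eqP; rewrite -hx se hu eqxx orbT.
subst u.
have wa : w != a by rewrite eq_sym.
have eba : e b a by rewrite se hu eqxx.
exists w; split.
- move=> u; have [z ez] := hn u.
  case: (z =P w) => [zw|/eqP zw]; last by exists z.
  subst z; have ub : u = b by apply/eqP; rewrite -hw se.
  subst u; by exists a.
- move=> [u [w2 [c [uw2 cw lw2 lu2]]]].
  have hu2 := pairE lu2.
  have ub : u = b by apply/eqP; rewrite -hw se hu2 eqxx orbT.
  subst u.
  have ac : a = c by move: (hu2 a); rewrite eba (negbTE uw) orbF => /esym/eqP.
  subst c.
  apply: np4; exact: (p4_iso sg conn hx hu hu2 hw bx wa).
Qed.
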